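(* Under the setting below, with positive step sizes $\eta_t$, let $\lambda^*\in[0,\pi]$ minimize $\sum_{t=1}^TL_t(x_t^*,z_t^*,\lambda)$ over $\lambda\in[0,\pi]$. Then the shadow prices $\hat\lambda_t$ generated by strategy $\mathcal A$ satisfy $$G:=\sum_{t=1}^T\big[L_t(x^*_t,z^*_t,\lambda^* )-L_t(x^*_t,z^*_t,\hat\lambda_t)\big]\le\Xi\Psi\sum_{t=1}^T\eta_t.$$
   Context: Fix an integer $T\ge 1$, a data cap $Q>0$ and an overage fee $\pi>0$; let $q=Q/T$. Fix constants $\bar d\ge 0$, $\bar r\ge 0$. For each $t\in\{1,\dots,T\}$ fix reals $d_t\in[0,\bar d]$, $r_t\in[0,\bar r]$, $c_t>0$, $p_t>0$, $\theta_t>0$, $\beta_t>0$ and functions $u_t,e_t:[0,\infty)\to\mathbb{R}$ such that: $u_t$ is continuous, increasing and strictly concave, differentiable on $(0,\infty)$, and $u_t':(0,\infty)\to(0,\infty)$ is a strictly decreasing bijection with inverse $u_t'^{-1}$; $e_t$ is increasing, strictly convex and continuously differentiable, and $e_t':[0,\infty)\to[0,\infty)$ is a strictly increasing bijection with inverse $e_t'^{-1}$. For $0\le z\le x\le 1$ let $\tilde f_t(x,z)=\theta_t u_t(x)-\beta_t e_t((x-z)c_t)-p_t c_t z$ and $\tilde h_t(x,z)=d_t x+r_t z$, and $L_t(x,z,\lambda)=\tilde f_t(x,z)-\lambda(\tilde h_t(x,z)-q)$. Define $\tilde S(x,z)=\sum_{t=1}^T\tilde f_t(x_t,z_t)-\pi\big[\sum_{t=1}^T\tilde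 h_t(x_t,z_t)-Q\big]^+$ and let $(x^*,z^* )$ be a maximizer of $\tilde S$ over $\{0\le z_t\le x_t\le 1\ \forall t\}$. For $\lambda\ge 0$ and $\beta>0$ write $a_t(\beta,\lambda)=\frac{1}{c_t}\,e_t'^{-1}\!\Big(\frac{p_tc_t+r_t\lambda}{\beta c_t}\Big)$ and $X_t(\lambda)=p_tc_t+(d_t+r_t)\lambda$. Define the sets (all with $\beta>0$): $\Omega^{I}_t(\lambda)=\{(\beta,\theta):\theta>\frac{\beta c_t e_t'(c_t)+d_t\lambda}{u_t'(1)},\ \beta<\frac{p_tc_t+r_t\lambda}{c_te_t'(c_t)}\}$; $\Omega^{II}_t(\lambda)=\{(\beta,\theta):\theta>\frac{X_t(\lambda)}{u_t'(1)},\ \beta\ge\frac{p_tc_t+r_t\lambda}{c_te_t'(c_t)}\}$; $\Omega^{III}_t(\lambda)=\{(\beta,\theta):\frac{X_t(\lambda)}{u_t'(a_t(\beta,\lambda))}\le\theta\le\frac{X_t(\lambda)}{u_t'(1)}\}$; $\Omega^{IV}_t(\lambda)=\{(\beta,\theta):\theta<\frac{X_t(\lambda)}{u_t'(a_t(\beta,\lambda))},\ \theta\le\frac{\beta c_te_t'(c_t)+d_t\lambda}{u_t'(1)}\}$. Let $z^{II}_t(\lambda)=1-a_t(\beta_t,\lambda)$, $x^{III}_t(\lambda)=u_t'^{-1}(X_t(\lambda)/\theta_t)$, $z^{III}_t(\lambda)=x^{III}_t(\lambda)-a_t(\beta_t,\lambda)$, and let $x^{IV}_t(\lambda)\in(0,1]$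 be the solution of $\theta_tu_t'(x)-\beta_tc_te_t'(xc_t)=d_t\lambda$. Define $W_t(\lambda)=(1,0)$ if $(\beta_t,\theta_t)\in\Omega^I_t(\lambda)$; $(1,z^{II}_t(\lambda))$ if in $\Omega^{II}_t(\lambda)$; $(x^{III}_t(\lambda),z^{III}_t(\lambda))$ if in $\Omega^{III}_t(\lambda)$; $(x^{IV}_t(\lambda),0)$ if in $\Omega^{IV}_t(\lambda)$. Online strategy $\mathcal A$: set $\hat\lambda_1=0$; for $t=1,\dots,T$ set $(\hat x_t,\hat z_t)=W_t(\hat\lambda_t)$ and $\hat\lambda_{t+1}=\mathcal P_{[0,\pi]}\big(\hat\lambda_t+\eta_t[\tilde h_t(\hat x_t,\hat z_t)-q]\big)$, where $\mathcal P_{[0,\pi]}$ is the projection onto $[0,\pi]$. Maximal demand divergence: $\Xi=\max(|q-\bar d-\bar r|,q)$. Consumption fluctuation: with $l_t=q-\tilde h_t(x_t^*,z_t^* )$, $\bar l=\frac1T\sum_{t=1}^Tl_t$, $\psi_t=|t\bar l-\sum_{i=1}^tl_i|$, set $\Psi=\max_{1\le t\le T}\psi_t$. *)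

(* Defs.v *)
From Stdlib Require Import Reals Lra Classical ClassicalEpsilon.
Open Scope R_scope.

Fixpoint sum1 (n : nat) (f : nat -> R) : R :=
  match n with O => 0 | S k => sum1 k f + f (S k) end.

(* max1 n f = max (f 1, ..., f n)  (n >= 1; max1 0 f = 0 by convention) *)
Fixpoint max1 (n : nat) (f : nat -> R) : R :=
  match n with
  | O => 0
  | S k => match k with O => f 1%nat | _ => Rmax (max1 k f) (f (S k)) end
  end.

(* The data of the problem. du/de are the derivatives u_t', e_t';
   duinv/deinv their inverses. *)
Record Data := mkData {
  T : nat; Q : R; piF : R; dbar : R; rbar : R;
  d : nat -> R; r : nat -> R; c : nat -> R; p : nat -> R;
  theta : nat -> R; beta : nat -> R;
  u : nat -> R -> R; e : nat -> R -> R;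
  du : nat -> R -> R; de : nat -> R -> R;
  duinv : nat -> R -> R; deinv : nat -> R -> R }.

Definition q (D : Data) : R := Q D / INR (T D).

Definition Assumptions (D : Data) : Prop :=
  (1 <= T D)%nat /\ 0 < Q D /\ 0 < piF D /\ 0 <= dbar D /\ 0 <= rbar D /\
  forall t, (1 <= t <= T D)%nat ->
    (0 <= d D t <= dbar D) /\ (0 <= r D t <= rbar D) /\
    0 < c D t /\ 0 < p D t /\ 0 < theta D t /\ 0 < beta D t /\
    (forall x, 0 <= x -> limit1_in (u D t) (fun y => 0 <= y) (u D t x) x) /\
    (forall x y, 0 <= x -> x <= y -> u D t x <= u D t y) /\
    (forall x y s, 0 <= x -> 0 <= y -> x <> y -> 0 < s < 1 ->
        s * u D t x + (1 - s) * u D t y < u D t (s * x + (1 - s) * y)) /\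
    (forall x, 0 < x -> derivable_pt_lim (u D t) x (du D t x)) /\
    (forall x, 0 < x -> 0 < du D t x) /\
    (forall x y, 0 < x -> x < y -> du D t y < du D t x) /\
    (forall y, 0 < y -> 0 < duinv D t y /\ du D t (duinv D t y) = y) /\
    (forall x, 0 < x -> duinv D t (du D t x) = x) /\
    (forall x y, 0 <= x -> x <= y -> e D t x <= e D t y) /\
    (forall x y s, 0 <= x -> 0 <= y -> x <> y -> 0 < s < 1 ->
        e D t (s * x + (1 - s) * y) < s * e D t x + (1 - s) * e D t y) /\
    (forall x, 0 <= x ->
        limit1_in (fun h => (e D t (x + h) - e D t x) / h)
                  (fun h => h <> 0 /\ 0 <= x + h) (de D t x) 0) /\
    (forall x, 0 <= x -> limit1_in (de D t) (fun y => 0 <= y) (de D t x) x) /\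
    (forall x, 0 <= x -> 0 <= de D t x) /\
    (forall x y, 0 <= x -> x < y -> de D t x < de D t y) /\
    (forall y, 0 <= y -> 0 <= deinv D t y /\ de D t (deinv D t y) = y) /\
    (forall x, 0 <= x -> deinv D t (de D t x) = x).

Definition ftil (D : Data) (t : nat) (x z : R) : R :=
  theta D t * u D t x - beta D t * e D t ((x - z) * c D t) - p D t * c D t * z.

Definition htil (D : Data) (t : nat) (x z : R) : R := d D t * x + r D t * z.

Definition Lag (D : Data) (t : nat) (x z lam : R) : R :=
  ftil D t x z - lam * (htil D t x z - q D).

Definition Stil (D : Data) (x z : nat -> R) : R :=
  sum1 (T D) (fun t => ftil D t (x t) (z t))
  - piF D * Rmax 0 (sum1 (T D) (fun t => htil D t (x t) (z t)) - Q D).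

Definition feasible (D : Data) (x z : nat -> R) : Prop :=
  forall t, (1 <= t <= T D)%nat -> 0 <= z t /\ z t <= x t /\ x t <= 1.

Definition is_maximizer (D : Data) (xs zs : nat -> R) : Prop :=
  feasible D xs zs /\
  forall x z, feasible D x z -> Stil D x z <= Stil D xs zs.

Definition a_ (D : Data) (t : nat) (b lam : R) : R :=
  / c D t * deinv D t ((p D t * c D t + r D t * lam) / (b * c D t)).

Definition X_ (D : Data) (t : nat) (lam : R) : R :=
  p D t * c D t + (d D t + r D t) * lam.

Definition OmegaI (D : Data) (t : nat) (lam b th : R) : Prop :=
  0 < b /\
  th > (b * c D t * de D t (c D t) + d D t * lam) / du D t 1 /\
  b < (p D t * c D t + r D t * lam) / (c D t * de D t (c D t)).

Definition OmegaII (D : Data) (t : nat) (lam b th : R) : Prop :=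
  0 < b /\
  th > X_ D t lam / du D t 1 /\
  b >= (p D t * c D t + r D t * lam) / (c D t * de D t (c D t)).

Definition OmegaIII (D : Data) (t : nat) (lam b th : R) : Prop :=
  0 < b /\
  X_ D t lam / du D t (a_ D t b lam) <= th /\ th <= X_ D t lam / du D t 1.

Definition OmegaIV (D : Data) (t : nat) (lam b th : R) : Prop :=
  0 < b /\
  th < X_ D t lam / du D t (a_ D t b lam) /\
  th <= (b * c D t * de D t (c D t) + d D t * lam) / du D t 1.

Definition zII (D : Data) (t : nat) (lam : R) : R := 1 - a_ D t (beta D t) lam.
Definition xIII (D : Data) (t : nat) (lam : R) : R :=
  duinv D t (X_ D t lam / theta D t).
Definition zIII (D : Data) (t : nat) (lam : R) : R :=
  xIII D t lam - a_ D t (beta D t) lam.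

Definition eqIV (D : Data) (t : nat) (lam x : R) : Prop :=
  0 < x <= 1 /\
  theta D t * du D t x - beta D t * c D t * de D t (x * c D t) = d D t * lam.

(* the solution in (0,1] of the region-IV equation (1 if none exists) *)
Definition xIV (D : Data) (t : nat) (lam : R) : R :=
  match excluded_middle_informative (exists x, eqIV D t lam x) with
  | left H => proj1_sig (constructive_indefinite_description _ H)
  | right _ => 1
  end.

Definition W (D : Data) (t : nat) (lam : R) : R * R :=
  let b := beta D t in let th := theta D t in
  if excluded_middle_informative (OmegaI D t lam b th) then (1, 0)
  else if excluded_middle_informative (OmegaII D t lam b th) then (1, zII D t lam)
  else if excluded_middle_informative (OmegaIII D t lam b th)
       then (xIII D t lam, zIII D t lam)
  else (xIV D t lam, 0).

Definition proj0pi (D : Data) (x : R) : R := Rmax 0 (Rmin (piF D) x).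

(* lamseq k = \hat\lambda_{k+1} *)
Fixpoint lamseq (D : Data) (eta : nat -> R) (k : nat) : R :=
  match k with
  | O => 0
  | S k' =>
      let lam := lamseq D eta k' in
      let w := W D (S k') lam in
      proj0pi D (lam + eta (S k') * (htil D (S k') (fst w) (snd w) - q D))
  end.

Definition lamhat (D : Data) (eta : nat -> R) (t : nat) : R :=
  lamseq D eta (pred t).

Definition Xi (D : Data) : R := Rmax (Rabs (q D - dbar D - rbar D)) (q D).

Definition Psi (D : Data) (xs zs : nat -> R) : R :=
  let l := fun t => q D - htil D t (xs t) (zs t) in
  let lbar := sum1 (T D) l / INR (T D) in
  max1 (T D) (fun t => Rabs (INR t * lbar - sum1 t l)).

(* Main.v *)
Require Import Defs.
From Stdlib Require Import Reals Lra Lia Classical ClassicalEpsilon.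
Open Scope R_scope.

Lemma sum1_ext n f g : (forall t, (1<=t<=n)%nat -> f t = g t) -> sum1 n f = sum1 n g.
Proof. induction n; intros H; simpl; auto. rewrite IHn by (intros; apply H; lia). rewrite H by lia. auto. Qed.

Lemma sum1_le n f g : (forall t, (1<=t<=n)%nat -> f t <= g t) -> sum1 n f <= sum1 n g.
Proof. induction n; intros H; simpl; [lra|]. assert (sum1 n f <= sum1 n g) by (apply IHn; intros; apply H; lia).
 assert (f (S n) <= g (S n)) by (apply H; lia). lra. Qed.

Lemma sum1_plus n f g : sum1 n (fun t => f t + g t) = sum1 n f + sum1 n g.
Proof. induction n; simpl; [lra|]. rewrite IHn. ring. Qed.

Lemma sum1_minus n f g : sum1 n (fun t => f t - g t) = sum1 n f - sum1 n g.
Proof. induction n; simpl; [lra|]. rewrite IHn. ring. Qed.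

Lemma sum1_scal n a f : sum1 n (fun t => a * f t) = a * sum1 n f.
Proof. induction n; simpl; [ring|]. rewrite IHn. ring. Qed.

Lemma sum1_const n a : sum1 n (fun _ => a) = INR n * a.
Proof. induction n; simpl sum1; [simpl; ring|]. rewrite IHn, S_INR. ring. Qed.

Lemma abel (lh Sq : nat -> R) n :
  sum1 n (fun t => lh t * (Sq t - Sq (pred t))) + sum1 n (fun t => (lh (S t) - lh t) * Sq t)
  = lh (S n) * Sq n - lh 1%nat * Sq 0%nat.
Proof. induction n; simpl; [ring|]. simpl in IHn. lra. Qed.

Lemma max1_ge n f t : (1 <= t <= n)%nat -> f t <= max1 n f.
Proof.
  induction n; intros H; [lia|]. destruct n.
  - assert (t = 1%nat) by lia. subst. simpl. lra.
  - change (max1 (S (S n)) f) with (Rmax (max1 (S n) f) (f (S (S n)))).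
    destruct (Nat.eq_dec t (S (S n))).
    + subst. apply Rmax_r.
    + eapply Rle_trans; [apply IHn; lia| apply Rmax_l].
Qed.

Lemma proj_range D x : 0 < piF D -> 0 <= proj0pi D x <= piF D.
Proof. intros. unfold proj0pi, Rmax, Rmin. repeat destruct Rle_dec; lra. Qed.

Lemma lamseq_range D eta k : 0 < piF D -> 0 <= lamseq D eta k <= piF D.
Proof. intros. destruct k; simpl; [lra|]. apply proj_range; auto. Qed.

Lemma proj_step D a dl : 0 <= a <= piF D -> Rabs (proj0pi D (a + dl) - a) <= Rabs dl.
Proof. intros. unfold proj0pi, Rmax, Rmin. repeat destruct Rle_dec; unfold Rabs; repeat destruct Rcase_abs; lra. Qed.

Lemma W_feas D t lam : Assumptions D -> (1 <= t <= T D)%nat -> 0 <= lam ->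
  0 <= snd (W D t lam) /\ snd (W D t lam) <= fst (W D t lam) /\ fst (W D t lam) <= 1.
Proof.
  intros HA Ht Hl.
  destruct HA as [_ [_ [_ [_ [_ Hall]]]]].
  destruct (Hall t Ht) as [Hd [Hr [Hc [Hp [Hth [Hb [_ [_ [_ [_ [Hdu1 [Hdu2 [Hdui1 [Hdui2
    [_ [_ [_ [_ [Hde1 [Hde2 [Hdei1 Hdei2]]]]]]]]]]]]]]]]]]]]].
  assert (Hdec : 0 < de D t (c D t)).
  { assert (0 <= de D t 0) by (apply Hde1; lra). assert (de D t 0 < de D t (c D t)) by (apply Hde2; lra). lra. }
  assert (HN : 0 <= p D t * c D t + r D t * lam).
  { assert (0 < p D t * c D t) by (apply Rmult_lt_0_compat; lra). assert (0 <= r D t * lam) by (apply Rmult_le_pos; lra). lra. }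
  assert (Ha0 : 0 <= a_ D t (beta D t) lam).
  { unfold a_. apply Rmult_le_pos. left; apply Rinv_0_lt_compat; lra.
    apply Hdei1. apply Rmult_le_pos; [lra|]. left; apply Rinv_0_lt_compat; apply Rmult_lt_0_compat; lra. }
  unfold W.
  destruct (excluded_middle_informative _) as [HI|HI]; [simpl; lra|].
  destruct (excluded_middle_informative _) as [HII|HII].
  { simpl. unfold zII. destruct HII as [_ [_ Hbeta]].
    set (y := (p D t * c D t + r D t * lam) / (beta D t * c D t)).
    assert (Hy0 : 0 <= y).
    { unfold y. apply Rmult_le_pos; [lra|]. left; apply Rinv_0_lt_compat; apply Rmult_lt_0_compat; lra. }
    assert (Hy : y <= de D t (c D t)).
    { unfold y. apply Rmult_le_reg_r with (beta D t * c D t). apply Rmult_lt_0_compat; lra.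
      unfold Rdiv. rewrite Rmult_assoc, Rinv_l by (apply Rgt_not_eq; apply Rmult_lt_0_compat; lra).
      apply Rge_le in Hbeta.
      apply Rmult_le_compat_r with (r := c D t * de D t (c D t)) in Hbeta; [|left; apply Rmult_lt_0_compat; lra].
      unfold Rdiv in Hbeta. rewrite Rmult_assoc, Rinv_l in Hbeta by (apply Rgt_not_eq; apply Rmult_lt_0_compat; lra).
      lra. }
    assert (Hdy : deinv D t y <= c D t).
    { destruct (Rle_lt_dec (deinv D t y) (c D t)) as [|Hlt]; auto.
      destruct (Hdei1 y Hy0) as [Hd0 Hdd].
      assert (de D t (c D t) < de D t (deinv D t y)) by (apply Hde2; lra). lra. }
    assert (a_ D t (beta D t) lam <= 1).
    { unfold a_. fold y. apply Rmult_le_reg_l with (c D t); [lra|].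
      rewrite <- Rmult_assoc, Rinv_r by lra. lra. }
    lra. }
  destruct (excluded_middle_informative _) as [HIII|HIII].
  { simpl. unfold zIII, xIII. destruct HIII as [_ [H1 H2]].
    assert (HX : 0 < X_ D t lam).
    { unfold X_. assert (0 < p D t * c D t) by (apply Rmult_lt_0_compat; lra).
      assert (0 <= (d D t + r D t) * lam) by (apply Rmult_le_pos; lra). lra. }
    set (a := a_ D t (beta D t) lam) in *.
    set (y := X_ D t lam / theta D t).
    assert (Hy : 0 < y) by (unfold y; apply Rdiv_lt_0_compat; lra).
    destruct (Hdui1 y Hy) as [Hx0 Hxy].
    assert (Hdu1p : 0 < du D t 1) by (apply Hdu1; lra).
    assert (Hy1 : du D t 1 <= y).
    { unfold y. apply Rmult_le_reg_r with (theta D t); [lra|].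
      unfold Rdiv. rewrite Rmult_assoc, Rinv_l by lra.
      apply Rmult_le_compat_r with (r := du D t 1) in H2; [|lra].
      unfold Rdiv in H2. rewrite Rmult_assoc, Rinv_l in H2 by lra. lra. }
    assert (Hx1 : duinv D t y <= 1).
    { destruct (Rle_lt_dec (duinv D t y) 1) as [|Hlt]; auto.
      assert (du D t (duinv D t y) < du D t 1) by (apply Hdu2; lra). lra. }
    assert (Hxa : a <= duinv D t y).
    { destruct (Rle_lt_dec a (duinv D t y)) as [|Hlt]; auto.
      assert (du D t a < du D t (duinv D t y)) by (apply Hdu2; lra).
      assert (Hap : 0 < du D t a) by (apply Hdu1; lra).
      assert (y <= du D t a).
      { unfold y. apply Rmult_le_reg_r with (theta D t); [lra|].
        unfold Rdiv. rewrite Rmult_assoc, Rinv_l by lra.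
        apply Rmult_le_compat_r with (r := du D t a) in H1; [|lra].
        unfold Rdiv in H1. rewrite Rmult_assoc, Rinv_l in H1 by lra. lra. }
      lra. }
    lra. }
  simpl. unfold xIV. destruct (excluded_middle_informative _) as [Hex|]; [|lra].
  destruct (proj2_sig (constructive_indefinite_description _ Hex)) as [Hx _]. lra.
Qed.

Lemma htil_bound D t x z : Assumptions D -> (1 <= t <= T D)%nat -> 0 <= z -> z <= x -> x <= 1 ->
  Rabs (htil D t x z - q D) <= Xi D.
Proof.
  intros HA Ht H1 H2 H3.
  destruct HA as [_ [_ [_ [_ [_ Hall]]]]].
  destruct (Hall t Ht) as [Hd [Hr _]].
  assert (0 <= d D t * x) by (apply Rmult_le_pos; lra).
  assert (0 <= r D t * z) by (apply Rmult_le_pos; lra).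
  assert (d D t * x <= d D t * 1) by (apply Rmult_le_compat_l; lra).
  assert (r D t * z <= r D t * 1) by (apply Rmult_le_compat_l; lra).
  rewrite Rmult_1_r in *. unfold htil, Xi, Rmax. destruct Rle_dec; unfold Rabs in *; repeat destruct Rcase_abs; lra.
Qed.

Theorem mainTheorem9 (D : Data) (eta : nat -> R) (xs zs : nat -> R) (lamstar : R) :
  Assumptions D ->
  (forall t, (1 <= t <= T D)%nat -> 0 < eta t) ->
  is_maximizer D xs zs ->
  0 <= lamstar <= piF D ->
  (forall lam, 0 <= lam <= piF D ->
     sum1 (T D) (fun t => Lag D t (xs t) (zs t) lamstar)
     <= sum1 (T D) (fun t => Lag D t (xs t) (zs t) lam)) ->
  sum1 (T D) (fun t => Lag D t (xs t) (zs t) lamstar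
                       - Lag D t (xs t) (zs t) (lamhat D eta t))
  <= Xi D * Psi D xs zs * sum1 (T D) eta.
Proof.
  intros HA Heta Hmax Hls Hopt.
  pose proof HA as [HT [HQ [Hpi [Hdb [Hrb Ht]]]]].
  set (l := fun t => q D - htil D t (xs t) (zs t)).
  assert (HTpos: 0 < INR (T D)) by (apply lt_0_INR; lia).
  assert (Hlh: forall t, 0 <= lamhat D eta t <= piF D) by (intro; apply lamseq_range; auto).
  assert (HsumL: forall lam, sum1 (T D) (fun t => Lag D t (xs t) (zs t) lam)
     = sum1 (T D) (fun t => ftil D t (xs t) (zs t)) + lam * sum1 (T D) l).
  { intro lam. rewrite <- sum1_scal, <- sum1_plus. apply sum1_ext; intros; unfold Lag, l; ring. }
  assert (Hopt2: forall t, (1<=t<=T D)%nat -> lamstar * sum1 (T D) l <= lamhat D eta t * sum1 (T D) l).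
  { intros t _. specialize (Hopt (lamhat D eta t) (Hlh t)). rewrite !HsumL in Hopt. lra. }
  assert (Hstep1: sum1 (T D) (fun t => Lag D t (xs t) (zs t) lamstar
                       - Lag D t (xs t) (zs t) (lamhat D eta t))
        = lamstar * sum1 (T D) l - sum1 (T D) (fun t => lamhat D eta t * l t)).
  { rewrite <- sum1_scal, <- sum1_minus; apply sum1_ext; intros; unfold Lag, l; ring. }
  set (lb := sum1 (T D) l / INR (T D)).
  assert (Hstep2: lamstar * sum1 (T D) l <= lb * sum1 (T D) (lamhat D eta)).
  { assert (H : sum1 (T D) (fun _ => lamstar * sum1 (T D) l)
               <= sum1 (T D) (fun t => sum1 (T D) l * lamhat D eta t)).
    { apply sum1_le. intros. rewrite (Rmult_comm (sum1 (T D) l)). apply Hopt2; auto. }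
    rewrite sum1_const, sum1_scal in H.
    apply Rmult_le_reg_l with (INR (T D)); auto.
    unfold lb. replace (INR (T D) * (sum1 (T D) l / INR (T D) * sum1 (T D) (lamhat D eta)))
      with (sum1 (T D) l * sum1 (T D) (lamhat D eta)) by (field; lra). lra. }
  set (Sq := fun t => INR t * lb - sum1 t l).
  assert (Hstep3: sum1 (T D) (fun t => lamhat D eta t * (Sq t - Sq (pred t)))
     = lb * sum1 (T D) (lamhat D eta) - sum1 (T D) (fun t => lamhat D eta t * l t)).
  { rewrite <- sum1_scal, <- sum1_minus. apply sum1_ext; intros t Htt.
    destruct t; [lia|]. unfold Sq. simpl pred. rewrite S_INR.
    change (sum1 (S t) l) with (sum1 t l + l (S t)). ring. }
  pose proof (abel (lamhat D eta) Sq (T D)) as Hab.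
  assert (HS0 : Sq 0%nat = 0) by (unfold Sq; simpl; ring).
  assert (HST : Sq (T D) = 0) by (unfold Sq, lb; field; lra).
  rewrite HS0, HST in Hab.
  assert (Hstep4: sum1 (T D) (fun t => (lamhat D eta (S t) - lamhat D eta t) * Sq t)
     >= - (Xi D * Psi D xs zs * sum1 (T D) eta)).
  { rewrite <- sum1_scal.
    assert (sum1 (T D) (fun t => - (Xi D * Psi D xs zs * eta t)) <=
            sum1 (T D) (fun t => (lamhat D eta (S t) - lamhat D eta t) * Sq t)).
    2:{ assert (E: sum1 (T D) (fun t => - (Xi D * Psi D xs zs * eta t)) = - sum1 (T D) (fun t => Xi D * Psi D xs zs * eta t)).
        { rewrite <- (Rmult_1_l (sum1 _ (fun t => Xi D * Psi D xs zs * eta t))), Ropp_mult_distr_l, <- sum1_scal.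
          apply sum1_ext; intros; ring. }
        lra. }
    apply sum1_le. intros t Htt.
    assert (HPsi: Rabs (Sq t) <= Psi D xs zs).
    { unfold Psi. cbv zeta. apply (max1_ge (T D) (fun t => Rabs (INR t * lb - sum1 t l)) t Htt). }
    assert (HdL: Rabs (lamhat D eta (S t) - lamhat D eta t) <= eta t * Xi D).
    { destruct t; [lia|].
      change (lamhat D eta (S (S t))) with (lamseq D eta (S t)).
      change (lamhat D eta (S t)) with (lamseq D eta t).
      cbn [lamseq].
      eapply Rle_trans. apply proj_step. apply lamseq_range; auto.
      rewrite Rabs_mult, Rabs_pos_eq by (left; apply Heta; auto).
      apply Rmult_le_compat_l. left; apply Heta; auto.
      assert (0 <= lamseq D eta t) by (apply lamseq_range; auto).
      destruct (W_feas D (S t) (lamseq D eta t) HA Htt) as [F1 [F2 F3]]; [lra|].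
      apply htil_bound; auto. }
    assert (0 <= Rabs (Sq t)) by apply Rabs_pos.
    assert (0 <= Rabs (lamhat D eta (S t) - lamhat D eta t)) by apply Rabs_pos.
    assert (Rabs ((lamhat D eta (S t) - lamhat D eta t) * Sq t) <= eta t * Xi D * Psi D xs zs).
    { rewrite Rabs_mult. apply Rmult_le_compat; auto. }
    assert (- Rabs ((lamhat D eta (S t) - lamhat D eta t) * Sq t) <= (lamhat D eta (S t) - lamhat D eta t) * Sq t)
      by (unfold Rabs; destruct Rcase_abs; lra).
    assert (eta t * Xi D * Psi D xs zs = Xi D * Psi D xs zs * eta t) by ring.
    lra. }
  rewrite Hstep1. lra.
Qed.
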